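(* Let $M$ and $I$ be observable FSMs over the same input alphabet $\Sigma_I$ and output alphabet $\Sigma_O$, with initial states $s_0$ and $t_0$ respectively. Let $k\in\mathbb{N}$, let $\bar x_1/\bar y_1,\ \bar x_2/\bar y_2\in L(M)\cap L(I)$, and suppose that a set $W\subseteq\Sigma_I^*$ r($k$)-distinguishes the states $s_0\text{-after-}\bar x_1/\bar y_1$ and $s_0\text{-after-}\bar x_2/\bar y_2$ of $M$. If $I$ passes every test case in $\{\bar x_1,\bar x_2\}.W$, then $t_0\text{-after-}\bar x_1/\bar y_1\neq t_0\text{-after-}\bar x_2/\bar y_2$, i.e. the two traces reach distinct states of $I$.
   Context: An FSM is $M=(S,s_0,\Sigma_I,\Sigma_O,h_M)$ with finite state set $S$, initial state $s_0$, finite input/output alphabets and transition relation $h_M\subseteq S\times\Sigma_I\times\Sigma_O\times S$. IO sequences $(x_1,y_1)\dots(x_n,y_n)$ are written $x_1\dots x_n/y_1\dots y_n$. $L_M(s)$ is the set of IO sequences $x_1\dots x_k/y_1\dots y_k$ such that there are states $s=q_0,q_1,\dots,q_k$ with $(q_{i-1},x_i,y_i,q_i)\in h_M$ for all $i$; $L(M)=L_M(s_0)$. $out(s,x)=\{y\mid\exists s'.(s,x,y,s')\in h_M\}$. $M$ is observable if for each $s,x,y$ there is at most one $s'$ with $(s,x,y,s')\in h_M$; then $s\text{-after-}\alpha$ denotes the unique state reached from $s$ by $\alpha\in L_M(s)$. $\Delta_M(s)=\{x\in\Sigma_I\mid out(s,x)\neq\varnothing\}$ is the set of defined inputs of $s$,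 and for an IO sequence $\alpha$, $\Delta_M(\alpha)=\Delta_M(s_0\text{-after-}\alpha)$ if $\alpha\in L(M)$ and $\Delta_M(\alpha)=\varnothing$ otherwise. $\mathrm{Pref}(\alpha)$ is the set of prefixes of a sequence (including $\epsilon$ and $\alpha$), lifted to sets by union; $A.B=\{a.b\mid a\in A,b\in B\}$ for sets of sequences, with the convention $A.\varnothing=A$. r-distinguishing sets: every $W\subseteq\Sigma_I^*$ r(0)-distinguishes any two states $s_1,s_2$ of $M$ with $\Delta_M(s_1)\neq\Delta_M(s_2)$. For $k\ge0$, $W$ r($k+1$)-distinguishes $s_1,s_2$ if $W$ r($k$)-distinguishes them, or if there is an input $x\in\Delta_M(s_1)\cap\Delta_M(s_2)$ with $x\in\mathrm{Pref}(W)$ (as a length-one sequence) such that for every $y\in out(s_1,x)\cap out(s_2,x)$ there exists $W'\subseteq\Sigma_I^*$ with $\{x\}.W'\subseteq\mathrm{Pref}(W)$ and $W'$ r($k$)-distinguishes $s_1\text{-after-}x/y$ and $s_2\text{-after-}x/y$. Pass relation: $I$ passes a test case $\bar x\in\Sigma_I^*$ if for every prefix $\bar x_1$ of $\bar x$ and every $\bar x_1/\bar y_1\in L(I)$ we have $\bar x_1/\bar y_1\in L(M)$ and $\Delta_I(\bar x_1/\bar y_1)=\Delta_M(\bar x_1/\bar y_1)$. $I$ passes a set $T$ if it passes every element of $T$. *)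

(* Defs.v *)
From mathcomp Require Import all_boot.
Set Implicit Arguments. Unset Strict Implicit. Unset Printing Implicit Defensive.

Record FSM (X Y : finType) := mkFSM {
  state : finType;
  init : state;
  trans : state -> X -> Y -> state -> bool
}.

Section FSMDefs.
Variables (X Y : finType) (M : FSM X Y).

Definition observable : Prop :=
  forall (s : state M) x y (s1 s2 : state M),
    trans s x y s1 -> trans s x y s2 -> s1 = s2.

Fixpoint in_lang (s : state M) (a : seq (X * Y)) : bool :=
  match a with
  | [::] => true
  | (x, y) :: r => [exists s', trans s x y s' && in_lang s' r]
  end.

Definition lang (a : seq (X * Y)) : bool := in_lang (init M) a.

(* s-after-alpha: the (for observable M, unique) state reached from s by alpha *)
Fixpoint after (s : state M) (a : seq (X * Y)) : state M :=
  match a with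
  | [::] => s
  | (x, y) :: r =>
      match [pick s' | trans s x y s'] with
      | Some s' => after s' r
      | None => s
      end
  end.

Definition out (s : state M) (x : X) : {set Y} :=
  [set y | [exists s', trans s x y s']].

Definition Delta (s : state M) : {set X} :=
  [set x | out s x != set0].

Definition DeltaSeq (a : seq (X * Y)) : {set X} :=
  if lang a then Delta (after (init M) a) else set0.

End FSMDefs.

Definition Pref (T : eqType) (A : seq T -> Prop) : seq T -> Prop :=
  fun w => exists2 v, A v & prefix w v.

(* A.B with the convention A.emptyset = A *)
Definition catset (T : Type) (A B : seq T -> Prop) : seq T -> Prop :=
  fun w => ((forall b, ~ B b) /\ A w) \/
           (exists a b, [/\ A a, B b & w = a ++ b]).

Fixpoint rdist (X Y : finType) (M : FSM X Y) (k : nat)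
  : (seq X -> Prop) -> state M -> state M -> Prop :=
  match k with
  | 0 => fun W s1 s2 => Delta s1 <> Delta s2
  | k'.+1 => fun W s1 s2 =>
      rdist k' W s1 s2 \/
      exists x, [/\ x \in Delta s1, x \in Delta s2, Pref W [:: x] &
        forall y, y \in out s1 x -> y \in out s2 x ->
          exists W' : seq X -> Prop,
            (forall w, catset (fun v => v = [:: x]) W' w -> Pref W w) /\
            rdist k' W' (after s1 [:: (x, y)]) (after s2 [:: (x, y)])]
  end.

Definition passes (X Y : finType) (M I : FSM X Y) (xs : seq X) : Prop :=
  forall (xs1 : seq X) (ys1 : seq Y),
    prefix xs1 xs -> size ys1 = size xs1 ->
    lang I (zip xs1 ys1) ->
    lang M (zip xs1 ys1) /\ DeltaSeq I (zip xs1 ys1) = DeltaSeq M (zip xs1 ys1).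

Definition passes_set (X Y : finType) (M I : FSM X Y) (T : seq X -> Prop) : Prop :=
  forall xs, T xs -> passes M I xs.

(* Main.v *)
Require Import Defs.
From mathcomp Require Import all_boot.
From Stdlib Require Import Classical.

Section Aux.
Variables (X Y : finType) (M : FSM X Y).
Hypothesis obs : observable M.

Lemma ex_obs (s : state M) x y s' (P : pred (state M)) : trans s x y s' ->
  [exists s'', trans s x y s'' && P s''] = P s'.
Proof.
move=> Hs; apply/existsP/idP => [[s'' /andP[H1 H2]]|H].
  by rewrite (obs _ _ _ _ _ H1 Hs) in H2.
by exists s'; rewrite Hs.
Qed.

Lemma after_cons (s : state M) x y s' r : trans s x y s' -> after s ((x,y)::r) = after s' r.
Proof.
move=> Hs /=; case: pickP => [s'' H|H]; first by rewrite (obs _ _ _ _ _ H Hs).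
by rewrite H in Hs.
Qed.

Lemma in_lang_cat (s : state M) a b :
  in_lang s (a ++ b) = in_lang s a && in_lang (after s a) b.
Proof.
elim: a s => [|[x y] r IH] s //=.
case: (pickP (trans s x y)) => [s' Hs'|H].
  by rewrite (ex_obs _ _ _ _ _ Hs') (ex_obs _ _ _ _ _ Hs') IH.
have E : forall P : pred (state M), [exists s'', trans s x y s'' && P s''] = false.
  by move=> P; apply/existsP => -[s'' /andP[H1 _]]; rewrite H in H1.
by rewrite !E.
Qed.

Lemma after_cat (s : state M) a b : in_lang s a -> after s (a ++ b) = after (after s a) b.
Proof.
elim: a s => [|[x y] r IH] s //= /existsP[s' /andP[Hs Hr]].
case: pickP => [s2 H|H]; last by rewrite H in Hs.
by rewrite (obs _ _ _ _ _ H Hs) IH.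
Qed.

End Aux.

Lemma passes_prefix (X Y : finType) (M I : FSM X Y) xs xs' :
  passes M I xs -> prefix xs' xs -> passes M I xs'.
Proof.
move=> H Hp xs1 ys1 Hp1; apply: H; exact: prefix_trans Hp1 Hp.
Qed.


Lemma in_lang1 (X Y : finType) (M : FSM X Y) (s : state M) x y :
  in_lang s [:: (x, y)] = (y \in out s x).
Proof. by rewrite /out inE /=; apply: eq_existsb => s'; rewrite andbT. Qed.

Lemma pass_full (X Y : finType) (M I : FSM X Y) xs (a : seq (X * Y)) :
  passes M I xs -> prefix (unzip1 a) xs -> lang I a ->
  lang M a /\ Delta (after (init I) a) = Delta (after (init M) a).
Proof.
move=> H Hp LI.
have := H (unzip1 a) (unzip2 a) Hp; rewrite !size_map zip_unzip => /(_ erefl LI).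
by rewrite /DeltaSeq LI => -[-> E]; split.
Qed.

Lemma test_exists (X : finType) (a : seq X) (P : seq X -> Prop) (W : seq X -> Prop) :
  P a -> exists2 xs, catset P W xs & prefix a xs.
Proof.
move=> Pa; case: (classic (exists v, W v)) => [[v Wv]|NW].
  exists (a ++ v); last exact: prefix_prefix.
  by right; exists a, v.
exists a; last exact: prefix_refl.
by left; split => // b Wb; apply: NW; exists b.
Qed.

Arguments pass_full {X Y M I xs a}.
Arguments passes_prefix {X Y M I xs xs'}.

Lemma main (X Y : finType) (M I : FSM X Y) (k : nat) :
  observable M -> observable I ->
  forall (a1 a2 : seq (X * Y)) (W : seq X -> Prop),
  lang M a1 -> lang I a1 -> lang M a2 -> lang I a2 ->
  rdist k W (after (init M) a1) (after (init M) a2) ->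
  passes_set M I (catset (fun v => v = unzip1 a1 \/ v = unzip1 a2) W) ->
  after (init I) a1 <> after (init I) a2.
Proof.
move=> oM oI; elim: k => [|k IH] a1 a2 W LM1 LI1 LM2 LI2 Hd Hp Eq.
  have [xs1 T1 P1] := @test_exists _ _ _ W (or_introl (erefl (unzip1 a1)) :
     (fun v => v = unzip1 a1 \/ v = unzip1 a2) (unzip1 a1)).
  have [xs2 T2 P2] := @test_exists _ _ _ W (or_intror (erefl (unzip1 a2)) :
     (fun v => v = unzip1 a1 \/ v = unzip1 a2) (unzip1 a2)).
  have [_ E1] := pass_full (Hp _ T1) P1 LI1.
  have [_ E2] := pass_full (Hp _ T2) P2 LI2.
  by apply: Hd; rewrite -E1 -E2 Eq.
case: Hd => [Hd|[x [Hx1 Hx2 [v Wv Pxv] Hy]]]; first exact: IH Hd Hp Eq.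
have T1 : catset (fun v => v = unzip1 a1 \/ v = unzip1 a2) W (unzip1 a1 ++ v).
  by right; exists (unzip1 a1), v; split => //; left.
have T2 : catset (fun v => v = unzip1 a1 \/ v = unzip1 a2) W (unzip1 a2 ++ v).
  by right; exists (unzip1 a2), v; split => //; right.
have [_ E1] := pass_full (Hp _ T1) (prefix_prefix _ _) LI1.
have : x \in Delta (after (init I) a1) by rewrite E1.
rewrite inE => /set0Pn[y Hyt].
have LI1' : lang I (a1 ++ [:: (x, y)]) by rewrite /lang in_lang_cat //; apply/andP; split => //; rewrite in_lang1.
have LI2' : lang I (a2 ++ [:: (x, y)]) by rewrite /lang in_lang_cat //; apply/andP; split => //; rewrite in_lang1 -Eq.
have Pf : forall a, prefix (unzip1 (a ++ [:: (x, y)])) (unzip1 a ++ v).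
  by move=> a; rewrite /unzip1 map_cat prefix_catr // eqxx.
have [LM1' _] := pass_full (Hp _ T1) (Pf a1) LI1'.
have [LM2' _] := pass_full (Hp _ T2) (Pf a2) LI2'.
move: (LM1') (LM2'); rewrite /lang !in_lang_cat // => /andP[_ Hy1] /andP[_ Hy2].
rewrite in_lang1 in Hy1; rewrite in_lang1 in Hy2.
have [W' [HW' Hd']] := Hy y Hy1 Hy2.
apply: (IH (a1 ++ [:: (x, y)]) (a2 ++ [:: (x, y)]) W') => //.
- by rewrite !after_cat.
- move=> w [[NW' [->|->]]|[a [b [Ha Wb ->]]]].
  + exact: passes_prefix (Hp _ T1) (Pf a1).
  + exact: passes_prefix (Hp _ T2) (Pf a2).
  + have [v' Wv' Pv'] := HW' (x :: b) (or_intror (ex_intro _ [:: x] (ex_intro _ b (And3 erefl Wb erefl)))).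
    case: Ha => ->.
    * have T : catset (fun v => v = unzip1 a1 \/ v = unzip1 a2) W (unzip1 a1 ++ v').
        by right; exists (unzip1 a1), v'; split => //; left.
      by apply: (passes_prefix (Hp _ T)); rewrite /unzip1 map_cat -catA prefix_catr // eqxx.
    * have T : catset (fun v => v = unzip1 a1 \/ v = unzip1 a2) W (unzip1 a2 ++ v').
        by right; exists (unzip1 a2), v'; split => //; right.
      by apply: (passes_prefix (Hp _ T)); rewrite /unzip1 map_cat -catA prefix_catr // eqxx.
- by rewrite !after_cat // Eq.
Qed.

Theorem lemma1 (X Y : finType) (M I : FSM X Y) (k : nat)
  (a1 a2 : seq (X * Y)) (W : seq X -> Prop) :
  observable M -> observable I ->
  lang M a1 -> lang I a1 -> lang M a2 -> lang I a2 ->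
  rdist k W (after (init M) a1) (after (init M) a2) ->
  passes_set M I (catset (fun v => v = unzip1 a1 \/ v = unzip1 a2) W) ->
  after (init I) a1 <> after (init I) a2.
Proof.
move=> oM oI; exact: main.
Qed.
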